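(* Let $\Gamma$ be a finite connected graph, $\Sigma$ a motif in $\Gamma$ with vertices $p_1,\dots,p_m$, and $n_i$ the degree of vertex $i$ in $\Gamma$. Suppose $f$ is a real function on the vertices of $\Sigma$, not identically zero, and $\lambda\in\mathbb{R}$ are such that $$\frac{1}{n_i}\sum_{j\in\Sigma,\ j\sim i} f(j)=(1-\lambda)f(i)\quad\text{for all } i\in\Sigma.$$ Let $\Gamma^\Sigma$ be the graph obtained from $\Gamma$ by adding new vertices $q_1,\dots,q_m$, joining $q_\alpha$ and $q_\beta$ whenever $p_\alpha\sim p_\beta$, and joining each $q_\alpha$ to every vertex $p\notin\Sigma$ that is a neighbor of $p_\alpha$ in $\Gamma$. Then $\lambda$ is an eigenvalue of the normalized Laplacian of $\Gamma^\Sigma$, with an eigenfunction that equals $f(p_\alpha)$ at $p_\alpha$, equals $-f(p_\alpha)$ at $q_\alpha$ for each $\alpha$, and is $0$ at all other vertices.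
   Context: For a finite simple graph without isolated vertices, write $i\sim j$ for adjacency and $n_i$ for the degree of $i$. The normalized Laplacian acts on real functions $v$ on the vertices by $\Delta v(i)=v(i)-\frac{1}{n_i}\sum_{j\sim i}v(j)$; $\lambda$ is an eigenvalue with eigenfunction $u$ if $u\not\equiv 0$ and $\frac{1}{n_i}\sum_{j\sim i}u(j)=(1-\lambda)u(i)$ for all $i$. A motif in $\Gamma$ is a connected subgraph containing all edges of $\Gamma$ between its vertices. *)

(* Defs.v *)
From HB Require Import structures.
From mathcomp Require Import all_boot all_order all_algebra.
Set Implicit Arguments. Unset Strict Implicit. Unset Printing Implicit Defensive.
Import Order.TTheory GRing.Theory Num.Theory.
Local Open Scope ring_scope.

Definition simple_graph (V : finType) (e : rel V) : Prop :=
  symmetric e /\ irreflexive e.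

Definition no_isolated (V : finType) (e : rel V) : Prop :=
  forall x, exists y, e x y.

Definition connected_graph (V : finType) (e : rel V) : Prop :=
  forall x y, connect e x y.

Definition deg (V : finType) (e : rel V) (x : V) : nat := #|[set y | e x y]|.

Definition induced (V : finType) (e : rel V) (S : {set V}) : rel V :=
  [rel a b | [&& e a b, a \in S & b \in S]].

(* A motif: connected subgraph containing all edges of Gamma between its
   vertices, i.e. a nonempty vertex set S whose induced subgraph is connected. *)
Definition motif (V : finType) (e : rel V) (S : {set V}) : Prop :=
  S != set0 /\ forall x y, x \in S -> y \in S -> connect (induced e S) x y.

Definition nl_eigenfunction (R : realFieldType) (V : finType) (e : rel V)
  (lam : R) (u : V -> R) : Prop :=
  (exists i, u i != 0) /\
  forall i, (deg e i)%:R^-1 * (\sum_(j | e i j) u j) = (1 - lam) * u i.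

(* The doubled graph Gamma^Sigma: vertices V + copies q_alpha of motif
   vertices p_alpha. *)
Definition motif_vertex (V : finType) (S : {set V}) := {x : V | x \in S}.

Definition double_rel (V : finType) (e : rel V) (S : {set V}) :
  rel (V + motif_vertex S)%type :=
  fun a b =>
    match a, b with
    | inl x, inl y => e x y
    | inr q1, inr q2 => e (val q1) (val q2)
    | inl p, inr q => (p \notin S) && e (val q) p
    | inr q, inl p => (p \notin S) && e (val q) p
    end.

Definition double_fun (R : realFieldType) (V : finType) (S : {set V})
  (f : motif_vertex S -> R) : (V + motif_vertex S)%type -> R :=
  fun a =>
    match a with
    | inl p => match insub p with Some s => f s | None => 0 end
    | inr q => - f q
    end.

(* Main.v *)
Require Import Defs.
From HB Require Import structures.
From mathcomp Require Import all_boot all_order all_algebra.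
Import Order.TTheory GRing.Theory Num.Theory.
Local Open Scope ring_scope.

Lemma deg_sum (T : finType) (r : rel T) x : deg r x = (\sum_(y | r x y) 1)%N.
Proof. by rewrite /deg -sum1_card; apply: eq_bigl => y; rewrite inE. Qed.

Theorem theorem3 (R : realFieldType) (V : finType) (e : rel V)
  (S : {set V}) (f : motif_vertex S -> R) (lam : R) :
  simple_graph e -> no_isolated e -> connected_graph e ->
  motif e S ->
  (exists i, f i != 0) ->
  (forall i : motif_vertex S,
     (deg e (val i))%:R^-1 * (\sum_(j : motif_vertex S | e (val i) (val j)) f j)
       = (1 - lam) * f i) ->
  @nl_eigenfunction R _ (@double_rel V e S) lam (double_fun f).
Proof.
move=> [esym _] _ _ _ [i0 fi0] Hf.
set fs := fun x => double_fun f (inl x).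
have fsval : forall j : motif_vertex S, fs (val j) = f j.
  by move=> j; rewrite /fs /= valK.
have fsN : forall x, x \notin S -> fs x = 0.
  by move=> x xS; rewrite /fs /= insubN.
have subsum : forall (P : pred V) (G : V -> R),
    \sum_(j : motif_vertex S | P (val j)) G (val j) = \sum_(x | (x \in S) && P x) G x.
  by move=> P G; symmetry; exact: (big_sub_cond (mem S) P G).
have subsumn : forall (P : pred V),
    (\sum_(j : motif_vertex S | P (val j)) 1 = \sum_(x | (x \in S) && P x) 1)%N.
  by move=> P; symmetry; exact: (big_sub_cond (mem S) P (fun _ => 1%N)).
have fsS : forall (P : pred V), \sum_(y | P y) fs y = \sum_(y | (y \in S) && P y) fs y.
  move=> P; rewrite big_mkcond [RHS]big_mkcond; apply: eq_bigr => y _.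
  by case: (boolP (y \in S)) => //= /fsN ->; case: (P y).
have Hf' : forall q : motif_vertex S,
    (deg e (val q))%:R^-1 * (\sum_(x | (x \in S) && e (val q) x) fs x) = (1 - lam) * f q.
  move=> q; rewrite -Hf -subsum; congr (_ * _); apply: eq_bigr => j _; exact: fsval.
split; first by exists (inr i0); rewrite /= oppr_eq0.
case=> [p|q].
- rewrite deg_sum big_sumType /= big_sumType /=.
  case: (boolP (p \in S)) => pS.
  + rewrite /= !big_pred0_eq addn0 addr0.
    have -> : \sum_(i | e p i) double_fun f (inl i) = \sum_(i | e p i) fs i by [].
    rewrite fsS.
    rewrite (insubT (mem S) pS) /= -(Hf' (Sub p pS)) /=.
    by rewrite deg_sum.
  + rewrite insubN // mulr0.
    have -> : \sum_(i | e p i) double_fun f (inl i) = \sum_(i | e p i) fs i by [].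
    rewrite fsS.
    under [X in _ + X]eq_bigr => j _ do rewrite /= -fsval.
    rewrite sumrN.
    have -> : \sum_(i : motif_vertex S | ~~ false && e (sval i) p) fs (val i)
             = \sum_(i : motif_vertex S | e (val i) p) fs (val i) by [].
    rewrite (subsum (fun x => e x p)).
    have -> : \sum_(x | (x \in S) && e x p) fs x = \sum_(x | (x \in S) && e p x) fs x.
      by apply: eq_bigl => x; rewrite esym.
    by rewrite subrr mulr0.
- rewrite deg_sum big_sumType /= big_sumType /=.
  rewrite subsumn.
  have -> : (\sum_(i | (i \notin S) && e (val q) i) 1 + \sum_(x | (x \in S) && e (val q) x) 1
            = deg e (val q))%N.
    rewrite deg_sum [RHS](bigID (fun x => x \in S)) addnC /=.
    by congr (_ + _)%N; apply: eq_bigl => x; rewrite andbC.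
  have -> : \sum_(i | (i \notin S) && e (val q) i) double_fun f (inl i) = 0.
    by apply: big1 => y /andP[yS _]; exact: fsN.
  rewrite add0r sumrN mulrN mulrN; congr (- _).
  rewrite -Hf' -subsum; congr (_ * _); apply: eq_bigr => j _; by rewrite fsval.
Qed.
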